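(* Let $p$ be a prime with $p\equiv 1\pmod 4$, let $a$ be a generator of $\mathbb{F}_p^*$, let $k=\frac{p-1}{4}$, and let $$g_a=\begin{pmatrix}a&0\\0&a^{-1}\end{pmatrix},\qquad s=\begin{pmatrix}1&2^{-1}a^k\\ a^k&2^{-1}\end{pmatrix}\in SL_2(\mathbb{F}_p).$$ Let $T_w=\{g\in SL_2(\mathbb{F}_p): gw=wg\}$ be the centralizer of $w=\begin{pmatrix}0&1\\-1&0\end{pmatrix}$ in $SL_2(\mathbb{F}_p)$. Then $t=s\,g_a\,s^{-1}$ is a generator of $T_w$.
   Context: $2^{-1}$ denotes the inverse of $2$ in $\mathbb{F}_p$. Equivalently, $T_w=\left\{\begin{pmatrix}\alpha&-\beta\\ \beta&\alpha\end{pmatrix}:\alpha,\beta\in\mathbb{F}_p,\ \alpha^2+\beta^2=1\right\}$. *)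

(* Defs.v *)
From HB Require Import structures.
From mathcomp Require Import all_boot all_order all_algebra all_fingroup.
Set Implicit Arguments. Unset Strict Implicit. Unset Printing Implicit Defensive.
Import GRing.Theory.
Local Open Scope ring_scope.

Definition generates_Fp_units (p : nat) (a : 'F_p) : Prop :=
  a != 0 /\ forall x : 'F_p, x != 0 -> exists n : nat, x = a ^+ n.

Definition SL2 (p : nat) : {set 'M['F_p]_2} := [set g | \det g == 1].

Definition w_mx (p : nat) : 'M['F_p]_2 :=
  \matrix_(i < 2, j < 2)
    (if (val i == 0%N) && (val j == 1%N) then 1
     else if (val i == 1%N) && (val j == 0%N) then -1 else 0).

Definition T_w (p : nat) : {set 'M['F_p]_2} :=
  [set g in SL2 p | g *m w_mx p == w_mx p *m g].

Definition g_a (p : nat) (a : 'F_p) : 'M['F_p]_2 :=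
  \matrix_(i < 2, j < 2)
    (if (val i == 0%N) && (val j == 0%N) then a
     else if (val i == 1%N) && (val j == 1%N) then a^-1 else 0).

Definition s_mx (p : nat) (a : 'F_p) : 'M['F_p]_2 :=
  let k := ((p.-1) %/ 4)%N in
  \matrix_(i < 2, j < 2)
    (if (val i == 0%N) && (val j == 0%N) then 1
     else if (val i == 0%N) && (val j == 1%N) then (2%:R)^-1 * a ^+ k
     else if (val i == 1%N) && (val j == 0%N) then a ^+ k
     else (2%:R)^-1).

Definition generates (p : nat) (x : 'M['F_p]_2) (H : {set 'M['F_p]_2}) : Prop :=
  forall g : 'M['F_p]_2, g \in H <-> exists n : nat, g = x ^+ n.

(* Main.v *)
Require Import Defs.
From mathcomp Require Import all_boot all_order all_algebra all_fingroup all_field.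
From mathcomp Require Import ring zify.
Import GRing.Theory.
Local Open Scope ring_scope.

Definition mx2 {R : nzRingType} (x y z u : R) : 'M[R]_2 :=
  \matrix_(i, j) if i == 0 then (if j == 0 then x else y) else (if j == 0 then z else u).

Lemma ord2P (P : 'I_2 -> Prop) : P 0 -> P 1 -> forall i, P i.
Proof. by move=> P0 P1 [[|[|//]] Hi]; [rewrite (_ : Ordinal Hi = 0) | rewrite (_ : Ordinal Hi = 1)]; try apply/val_inj. Qed.

Lemma mx2_eta (R : nzRingType) (M : 'M[R]_2) : M = mx2 (M 0 0) (M 0 1) (M 1 0) (M 1 1).
Proof. by apply/matrixP; elim/ord2P => [|]; elim/ord2P; rewrite !mxE. Qed.

Lemma mulmx2 (R : nzRingType) (a b c d a' b' c' d' : R) :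
  mx2 a b c d *m mx2 a' b' c' d' =
  mx2 (a * a' + b * c') (a * b' + b * d') (c * a' + d * c') (c * b' + d * d').
Proof.
apply/matrixP; elim/ord2P; elim/ord2P;
  by rewrite !mxE !big_ord_recl big_ord0 !mxE /= addr0.
Qed.

Lemma det2 (R : comNzRingType) (M : 'M[R]_2) : \det M = M 0 0 * M 1 1 - M 0 1 * M 1 0.
Proof.
rewrite (expand_det_row _ ord0) !big_ord_recl big_ord0 /cofactor !det_mx11 !mxE /=.
rewrite /bump /= expr0 expr1 mul1r addr0.
have E1 : forall i : 'I_1, lift ord0 i = 1 :> 'I_2 by move=> i; apply/val_inj; rewrite /= ord1.
have E2 : forall i : 'I_1, lift (lift ord0 ord0) i = 0 :> 'I_2 by move=> i; apply/val_inj; rewrite /= ord1.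
rewrite !E2 !E1. have -> : ord0 = 0 :> 'I_2 by []. ring.
Qed.

Lemma det_mx2 (R : comNzRingType) (a b c d : R) : \det (mx2 a b c d) = a * d - b * c.
Proof. by rewrite det2 !mxE. Qed.

Lemma mx2_inj (R : nzRingType) (a b c d a' b' c' d' : R) :
  mx2 a b c d = mx2 a' b' c' d' -> [/\ a = a', b = b', c = c' & d = d'].
Proof.
move=> /matrixP E; split.
- by have := E 0 0; rewrite !mxE.
- by have := E 0 1; rewrite !mxE.
- by have := E 1 0; rewrite !mxE.
- by have := E 1 1; rewrite !mxE.
Qed.

Lemma mx2_1 (R : nzRingType) : mx2 1 0 0 1 = 1%:M :> 'M[R]_2.
Proof. by apply/matrixP; elim/ord2P; elim/ord2P; rewrite !mxE. Qed.

Lemma w_mx2 p : w_mx p = mx2 0 1 (-1) 0.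
Proof. by apply/matrixP; elim/ord2P; elim/ord2P; rewrite !mxE. Qed.
Lemma g_a2 p (a : 'F_p) : g_a a = mx2 a 0 0 a^-1.
Proof. by apply/matrixP; elim/ord2P; elim/ord2P; rewrite !mxE. Qed.
Lemma s_mx2 p (a : 'F_p) : s_mx a = mx2 1 (2%:R^-1 * a ^+ (p.-1 %/ 4)) (a ^+ (p.-1 %/ 4)) 2%:R^-1.
Proof. by apply/matrixP; elim/ord2P; elim/ord2P; rewrite !mxE. Qed.

Theorem lemma2 (p : nat) (a : 'F_p) :
  prime p -> (p %% 4 = 1)%N -> generates_Fp_units a ->
  s_mx a \in SL2 p /\
  generates (s_mx a *m g_a a *m invmx (s_mx a)) (T_w p).
Proof.
move=> pr p4 [a0 agen].
set k := (p.-1 %/ 4)%N.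
have [pk k0] : (p.-1 = 4 * k /\ 0 < k)%N by move: (prime_gt1 pr) => ?; rewrite /k; lia.
have two0 : (2%:R : 'F_p) != 0.
  rewrite -(dvdn_pcharf (pchar_Fp pr)); apply/negP => /dvdn_leq; lia.
have ap1 : a ^+ (4 * k) = 1.
  have := expf_card a.
  have -> : #|'F_p| = (4 * k).+1 by rewrite card_Fp //; move: (prime_gt1 pr); lia.
  by rewrite exprS -{3}[a]mulr1 => /(mulfI a0).
have a2k : a ^+ (2 * k) = -1.
  have : (a ^+ (2 * k)) ^+ 2 == 1 by rewrite -exprM mulnC mulnA ap1.
  rewrite sqrf_eq1 => /orP [/eqP H1|/eqP //].
  exfalso.
  have sub : [set~ (0 : 'F_p)] \subset [set a ^+ (val n) | n in [set: 'I_(2 * k)]].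
    apply/subsetP => x; rewrite !inE => /agen [n ->].
    apply/imsetP; have k2 : (0 < 2 * k)%N by lia. exists (Ordinal (ltn_pmod n k2)) => //.
    by rewrite /= {1}(divn_eq n (2 * k)) exprD mulnC exprM H1 expr1n mul1r.
  have := subset_leq_card sub; rewrite cardsC1 card_Fp //.
  have := leq_imset_card (fun n : 'I_(2 * k) => a ^+ val n) [set: 'I_(2 * k)].
  rewrite cardsT card_ord => A B; move: (leq_trans B A); lia.
set i := a ^+ k.
have Hi : i * i = -1 by rewrite /i -exprD addnn -mul2n.
have i0 : i != 0 by apply/negP => /eqP E; move: Hi; rewrite E mul0r => /eqP; rewrite eq_sym oppr_eq0 oner_eq0.
set sinv := mx2 (2%:R^-1) (- (2%:R^-1 * i)) (- i) 1.
have Ss : s_mx a = mx2 1 (2%:R^-1 * i) i 2%:R^-1 by rewrite s_mx2.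
have ssinv : s_mx a *m sinv = 1%:M.
  rewrite Ss mulmx2 -mx2_1; congr mx2; field: Hi; exact two0.
have sinvs : sinv *m s_mx a = 1%:M by apply: mulmx1C.
have sU : s_mx a \in unitmx by case: (mulmx1_unit ssinv).
have Einv : invmx (s_mx a) = sinv.
  by rewrite -[invmx _]mulmx1 -ssinv mulmxA mulVmx // mul1mx.
rewrite Einv.
have detS : \det (s_mx a) = 1.
  rewrite Ss det_mx2; have : i * i = -1 := Hi; move=> Hi'; field: Hi'; exact two0.
split; first by rewrite inE detS.
set E := mx2 i 0 0 (-i).
have wE : w_mx p = s_mx a *m E *m sinv.
  rewrite w_mx2 Ss !mulmx2; congr mx2; field: Hi; exact two0.
have detsinv : \det sinv = 1.
  have := det_mulmx (s_mx a) sinv; rewrite ssinv det1 detS mul1r => ->//.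
have tn : forall n, (s_mx a *m g_a a *m sinv) ^+ n = s_mx a *m mx2 (a ^+ n) 0 0 (a^-1 ^+ n) *m sinv.
  elim=> [|n IH].
    by rewrite !expr0 mx2_1 mulmx1 ssinv.
  rewrite exprSr IH -mulmxE !mulmxA -(mulmxA _ sinv) sinvs mulmx1 g_a2 -(mulmxA (s_mx a)) mulmx2 !exprSr.
  congr (_ *m _ *m _); congr mx2; ring.
have canc : forall X Y, s_mx a *m X *m sinv = s_mx a *m Y *m sinv -> X = Y.
  move=> X Y /(congr1 (fun M => sinv *m M *m s_mx a)) /=.
  by rewrite !mulmxA !sinvs !mul1mx -!mulmxA !sinvs !mulmx1.
move=> g; split.
- rewrite !inE => /andP [/eqP dg /eqP cg].
  set h := sinv *m g *m s_mx a.
  have gh : g = s_mx a *m h *m sinv.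
    by rewrite /h !mulmxA ssinv mul1mx -mulmxA ssinv mulmx1.
  have hE : h *m E = E *m h.
    apply: canc; move: cg; rewrite wE gh.
    rewrite !mulmxA -(mulmxA _ sinv (s_mx a)) sinvs mulmx1.
    by rewrite -(mulmxA _ sinv (s_mx a)) sinvs mulmx1.
  have dh : \det h = 1 by rewrite /h !det_mulmx detsinv dg detS !mul1r.
  move: hE dh gh; rewrite (mx2_eta _ h) /E !mulmx2 det_mx2.
  move: (h 0 0 : 'F_p) (h 0 1 : 'F_p) (h 1 0 : 'F_p) (h 1 1 : 'F_p) => x y z u.
  move=> /mx2_inj [_ Hy Hz _] dh gh.
  have y0 : y = 0.
    have : (2%:R * i) * y = 0 :> 'F_p.
      have e : (2%:R * i) * y = (i * y + 0 * u) - (x * 0 + y * - i) :> 'F_p by ring.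
      by rewrite e Hy subrr.
    by move/eqP; rewrite !mulf_eq0 (negbTE two0) (negbTE i0) /= => /eqP.
  have z0 : z = 0.
    have : (2%:R * i) * z = 0 :> 'F_p.
      have e : (2%:R * i) * z = (z * i + u * 0) - (0 * x + - i * z) :> 'F_p by ring.
      by rewrite e Hz subrr.
    by move/eqP; rewrite !mulf_eq0 (negbTE two0) (negbTE i0) /= => /eqP.
  rewrite y0 mul0r subr0 in dh.
  have x0 : x != 0 by apply/negP => /eqP E0; move: dh; rewrite E0 mul0r => /eqP; rewrite eq_sym oner_eq0.
  have [n xn] := agen x x0.
  exists n; rewrite tn gh; congr (_ *m _ *m _); congr mx2 => //.
  rewrite exprVn -xn; apply: (mulfI x0); rewrite dh mulfV //.
- move=> [n ->]; rewrite tn !inE; apply/andP; split.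
    rewrite !det_mulmx detS detsinv det_mx2 mul1r mulr1 mul0r subr0.
    by rewrite exprVn mulfV // expf_neq0.
  have cm : forall X Y, (s_mx a *m X *m sinv) *m (s_mx a *m Y *m sinv) = s_mx a *m (X *m Y) *m sinv.
    move=> X Y; rewrite !mulmxA -(mulmxA _ sinv (s_mx a)) sinvs mulmx1.
    by rewrite -(mulmxA (s_mx a) X Y).
  apply/eqP; rewrite wE !cm !mulmx2; congr (_ *m _ *m _); congr mx2; ring.
Qed.
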